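(* Let $\lambda>1$, $A=\mathrm{diag}(1,\lambda)$, and $f(x)=\tfrac12 x^TAx$ on $\mathbb{R}^2$, with gradient $g(x)=Ax$. Consider the iteration $x_{k+1}=x_k-\alpha_kg_k$, $g_k=Ax_k$, where $x_1\in\mathbb{R}^2$, $x_2=x_1-\alpha_1g_1$ for some $\alpha_1>0$, and for $k\ge 2$ $$\alpha_k=\gamma_k\frac{s_{k-1}^Ts_{k-1}}{s_{k-1}^Ty_{k-1}}+(1-\gamma_k)\frac{s_{k-1}^Ty_{k-1}}{y_{k-1}^Ty_{k-1}},\qquad s_{k-1}=x_k-x_{k-1},\ y_{k-1}=g_k-g_{k-1},$$ with $\gamma_k\in(0,1)$ for all $k$. Assume $g_1^{(i)}\neq0$ and $g_2^{(i)}\ne0$ for $i=1,2$. Let $q_k=(g_k^{(1)})^2/(g_k^{(2)})^2$, $M_k=\log q_k$, let $\theta$ be a root of $\theta^2-\theta+2=0$, and $\xi_k=M_k+(\theta-1)M_{k-1}$. If $|\xi_2|>8\log\lambda$, then there exists $c_1>0$ such that $$|\xi_k|\ge(\sqrt2-1)\,2^{k/2}c_1\quad\text{for all }k\ge 2.$$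
   Context: $g_k^{(i)}$ denotes the $i$-th component of $g_k$. Under these assumptions all $g_k^{(i)}$ remain nonzero, so $q_k$ and $M_k$ are well defined for all $k\ge1$; $\theta=\frac{1\pm\sqrt7\,i}{2}$ is complex and $|\cdot|$ is the complex modulus. *)

(* Defs.v *)
From Stdlib Require Import Reals.
From Coquelicot Require Import Coquelicot.
Open Scope R_scope.

(* Vectors of R^2 as pairs; component i=1 is fst, i=2 is snd. *)
Definition vsub (u v : R * R) : R * R := (fst u - fst v, snd u - snd v).
Definition vscal (a : R) (u : R * R) : R * R := (a * fst u, a * snd u).
Definition dot (u v : R * R) : R := fst u * fst v + snd u * snd v.

Definition Amul (lam : R) (x : R * R) : R * R := (fst x, lam * snd x).

Definition qratio (g : R * R) : R := (fst g) ^ 2 / (snd g) ^ 2.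
Definition Mlog (g : R * R) : R := ln (qratio g).

(* Main.v *)
Require Import Defs.
From Stdlib Require Import Reals Lra Psatz Lia.
From Coquelicot Require Import Coquelicot.
Open Scope R_scope.

Lemma step lam u v w a c gam :
  1 < lam -> 0 < a -> 0 < gam < 1 ->
  fst (Amul lam u) <> 0 -> snd (Amul lam u) <> 0 ->
  fst (Amul lam v) <> 0 -> snd (Amul lam v) <> 0 ->
  v = vsub u (vscal a (Amul lam u)) ->
  w = vsub v (vscal c (Amul lam v)) ->
  (let s := vsub v u in let y := vsub (Amul lam v) (Amul lam u) in
   c = gam * (dot s s / dot s y) + (1 - gam) * (dot s y / dot y y)) ->
  0 < c /\ fst (Amul lam w) <> 0 /\ snd (Amul lam w) <> 0 /\
  0 <= Mlog (Amul lam w) - Mlog (Amul lam v) + 2 * Mlog (Amul lam u) <= 2 * ln lam.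
Proof.
  intros Hl Ha Hg Hu1 Hu2 Hv1 Hv2 Hv Hw Hc.
  destruct u as [u1 u2]. subst v w. cbv zeta in Hc.
  unfold Mlog, qratio, Amul, vsub, vscal, dot in *; cbn [fst snd] in *.
  set (P := u1 ^ 2). set (Q := (lam * u2) ^ 2).
  assert (HP : 0 < P) by (unfold P; apply pow2_gt_0; auto).
  assert (HQ : 0 < Q) by (unfold Q; apply pow2_gt_0; auto).
  assert (Ha2 : 0 < a ^ 2) by (apply pow2_gt_0; lra).
  assert (E1 : (u1 - a * u1 - u1) * (u1 - a * u1 - u1) + (u2 - a * (lam * u2) - u2) * (u2 - a * (lam * u2) - u2) = a^2 * (P + Q)) by (unfold P, Q; ring).
  assert (E2 : (u1 - a * u1 - u1) * (u1 - a * u1 - u1) + (u2 - a * (lam * u2) - u2) * (lam * (u2 - a * (lam * u2)) - lam * u2) = a^2 * (P + lam * Q)) by (unfold P, Q; ring).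
  assert (E3 : (u1 - a * u1 - u1) * (u1 - a * u1 - u1) + (lam * (u2 - a * (lam * u2)) - lam * u2) * (lam * (u2 - a * (lam * u2)) - lam * u2) = a^2 * (P + lam^2 * Q)) by (unfold P, Q; ring).
  rewrite E1, E2, E3 in Hc.
  assert (D1 : 0 < P + lam * Q) by nra.
  assert (D2 : 0 < P + lam^2 * Q) by nra.
  replace (a ^ 2 * (P + Q) / (a ^ 2 * (P + lam * Q))) with ((P+Q)/(P + lam*Q)) in Hc by (field; lra).
  replace (a ^ 2 * (P + lam * Q) / (a ^ 2 * (P + lam^2 * Q))) with ((P+lam*Q)/(P + lam^2*Q)) in Hc by (field; lra).
  set (B1 := (P+Q)/(P + lam*Q)) in Hc.
  set (B2 := (P+lam*Q)/(P + lam^2*Q)) in Hc.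
  assert (HB1 : B1 * (P + lam*Q) = P + Q) by (unfold B1; field; lra).
  assert (HB2 : B2 * (P + lam^2*Q) = P + lam * Q) by (unfold B2; field; lra).
  assert (HB12 : B2 <= B1).
  { assert (HX : (B1 - B2) * ((P + lam*Q) * (P + lam^2*Q)) = P * Q * (lam - 1)^2) by (unfold B1, B2; field; lra).
    assert (0 <= P * Q * (lam - 1)^2) by (apply Rmult_le_pos; nra).
    assert (0 < (P + lam*Q) * (P + lam^2*Q)) by nra.
    nra. }
  destruct Hg as [Hg0 Hg1].
  assert (Hc1 : c * (P + lam*Q) <= P + Q).
  { rewrite Hc.
    assert (0 <= (1 - gam) * ((B1 - B2) * (P + lam*Q))) by (apply Rmult_le_pos; [lra|apply Rmult_le_pos; lra]).
    nra. }
  assert (Hc2 : P + lam * Q <= c * (P + lam^2*Q)).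
  { rewrite Hc.
    assert (0 <= gam * ((B1 - B2) * (P + lam^2*Q))) by (apply Rmult_le_pos; [lra|apply Rmult_le_pos; lra]).
    nra. }
  assert (Hlt1 : c < 1) by nra.
  assert (Hgt : 1 < lam * c) by nra.
  split; [nra|].
  set (V1 := u1 - a * u1) in *. set (V2 := lam * (u2 - a * (lam * u2))) in *.
  replace (V1 - c * V1) with ((1 - c) * V1) by ring.
  replace (lam * (u2 - a * (lam * u2) - c * V2)) with ((1 - lam * c) * V2) by (unfold V2; ring).
  assert (N1 : 1 - c <> 0) by lra.
  assert (N2 : 1 - lam * c <> 0) by lra.
  split; [apply Rmult_integral_contrapositive; auto|].
  split; [apply Rmult_integral_contrapositive; auto|].
  set (X := (1 - c) * P). set (Y := (lam * c - 1) * Q).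
  assert (HY : 0 < Y) by (unfold Y; nra).
  assert (HXY : Y <= X) by (unfold X, Y; nra).
  assert (HXY2 : X <= lam * Y) by (unfold X, Y; nra).
  assert (HV1 : 0 < V1 ^ 2) by (apply pow2_gt_0; auto).
  assert (HV2 : 0 < V2 ^ 2) by (apply pow2_gt_0; auto).
  assert (Hsum : ln (((1 - c) * V1) ^ 2 / ((1 - lam * c) * V2) ^ 2) - ln (V1 ^ 2 / V2 ^ 2) + 2 * ln (P / Q)
     = ln ((X / Y) ^ 2)).
  { replace (((1 - c) * V1) ^ 2 / ((1 - lam * c) * V2) ^ 2) with (((1-c)^2/(1 - lam*c)^2) * (V1 ^ 2 / V2 ^ 2))
      by (field; auto).
    assert (0 < (1-c)^2/(1 - lam*c)^2) by (apply Rdiv_lt_0_compat; apply pow2_gt_0; auto).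
    assert (0 < V1 ^ 2 / V2 ^ 2) by (apply Rdiv_lt_0_compat; auto).
    assert (0 < P / Q) by (apply Rdiv_lt_0_compat; auto).
    rewrite ln_mult by auto.
    replace ((X / Y) ^ 2) with (((1-c)^2/(1 - lam*c)^2) * ((P / Q) * (P / Q))).
    2:{ unfold X, Y. field. split; [lra|]. split; lra. }
    rewrite ln_mult by (auto; apply Rmult_lt_0_compat; auto).
    rewrite ln_mult by auto. ring. }
  rewrite Hsum.
  assert (HXY1 : 1 <= X / Y) by (apply Rle_div_r; lra).
  assert (HXY3 : X / Y <= lam) by (apply Rle_div_l; lra).
  split.
  - rewrite <- ln_1. apply ln_le; [lra|]. nra.
  - replace (2 * ln lam) with (ln (lam * lam)) by (rewrite ln_mult; lra).
    apply ln_le; [nra|]. nra.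
Qed.
Lemma theta_comp (theta : C) :
  Cplus (Cminus (Cmult theta theta) theta) (RtoC 2) = RtoC 0 ->
  fst theta = 1/2 /\ snd theta ^ 2 = 7/4.
Proof.
  destruct theta as [a b]. intro H.
  unfold Cplus, Cminus, Copp, Cmult, RtoC in H. cbn [fst snd] in *.
  injection H. intros H2 H1.
  assert (b * (2 * a - 1) = 0) by lra.
  destruct (Rmult_integral _ _ H0) as [Hb | Ha].
  - subst b. nra.
  - assert (a = 1/2) by lra. subst a. split; [lra|]. nra.
Qed.

Lemma xi_rec (ta tb m0 m1 m2 : R) : ta = 1/2 -> tb^2 = 7/4 ->
  Cplus (RtoC m2) (Cmult (Cminus (ta,tb) (RtoC 1)) (RtoC m1)) =
  Cplus (Cmult (ta,tb) (Cplus (RtoC m1) (Cmult (Cminus (ta,tb) (RtoC 1)) (RtoC m0))))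
        (RtoC (m2 - m1 + 2*m0)).
Proof.
  intros H1 H2. subst ta.
  unfold Cplus, Cminus, Copp, Cmult, RtoC. apply injective_projections; cbn [fst snd]; simpl; pose proof (f_equal (fun t => t * m0) H2) as H3; simpl in H3; lra.
Qed.

Lemma cmod_theta (ta tb : R) : ta = 1/2 -> tb^2 = 7/4 -> Cmod (ta, tb) = sqrt 2.
Proof. intros H1 H2. unfold Cmod. cbn [fst snd]. f_equal. subst. nra. Qed.

Lemma cmod_step (t z : C) (d L : R) : Cmod t = sqrt 2 -> Rabs d <= L ->
  Cmod (Cplus (Cmult t z) (RtoC d)) >= sqrt 2 * Cmod z - L.
Proof.
  intros Ht Hd.
  assert (E : Cmult t z = Cplus (Cplus (Cmult t z) (RtoC d)) (RtoC (- d))).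
  { unfold Cplus, RtoC. apply injective_projections; cbn [fst snd]; ring. }
  pose proof (Cmod_triangle (Cplus (Cmult t z) (RtoC d)) (RtoC (-d))) as Tr.
  rewrite <- E, Cmod_mult, Ht, Cmod_R, Rabs_Ropp in Tr. lra.
Qed.
Theorem lemma1 (lam : R) (x : nat -> R * R) (alpha gamma : nat -> R) (theta : C) :
  1 < lam ->
  (forall k, (1 <= k)%nat -> x (S k) = vsub (x k) (vscal (alpha k) (Amul lam (x k)))) ->
  0 < alpha 1%nat ->
  (forall k, (2 <= k)%nat ->
     let s := vsub (x k) (x (k - 1)%nat) in
     let y := vsub (Amul lam (x k)) (Amul lam (x (k - 1)%nat)) in
     alpha k = gamma k * (dot s s / dot s y) + (1 - gamma k) * (dot s y / dot y y)) ->
  (forall k, 0 < gamma k < 1) ->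
  fst (Amul lam (x 1%nat)) <> 0 -> snd (Amul lam (x 1%nat)) <> 0 ->
  fst (Amul lam (x 2%nat)) <> 0 -> snd (Amul lam (x 2%nat)) <> 0 ->
  Cplus (Cminus (Cmult theta theta) theta) (RtoC 2) = RtoC 0 ->
  let xi := fun k : nat =>
    Cplus (RtoC (Mlog (Amul lam (x k))))
          (Cmult (Cminus theta (RtoC 1)) (RtoC (Mlog (Amul lam (x (k - 1)%nat))))) in
  Cmod (xi 2%nat) > 8 * ln lam ->
  exists c1 : R, 0 < c1 /\
    forall k : nat, (2 <= k)%nat ->
      Cmod (xi k) >= (sqrt 2 - 1) * Rpower 2 (INR k / 2) * c1.
Proof.
  intros Hl Hrec Ha1 Halpha Hgam H11 H12 H21 H22 Hth xi Hxi2.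
  assert (Inv : forall j, 0 < alpha (S j) /\
     fst (Amul lam (x (S j))) <> 0 /\ snd (Amul lam (x (S j))) <> 0 /\
     fst (Amul lam (x (S (S j)))) <> 0 /\ snd (Amul lam (x (S (S j)))) <> 0).
  { induction j as [|j IH].
    - repeat split; auto.
    - destruct IH as [Ha [A1 [A2 [A3 A4]]]].
      destruct (step lam (x (S j)) (x (S (S j))) (x (S (S (S j)))) (alpha (S j)) (alpha (S (S j)))
                  (gamma (S (S j))) Hl Ha (Hgam _) A1 A2 A3 A4
                  (Hrec (S j) ltac:(lia)) (Hrec (S (S j)) ltac:(lia))
                  (Halpha (S (S j)) ltac:(lia))) as [B1 [B2 [B3 B4]]].
      repeat split; auto. }
  assert (Del : forall j, 0 <= Mlog (Amul lam (x (S (S (S j))))) - Mlog (Amul lam (x (S (S j))))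
                   + 2 * Mlog (Amul lam (x (S j))) <= 2 * ln lam).
  { intro j. destruct (Inv j) as [Ha [A1 [A2 [A3 A4]]]].
      destruct (step lam (x (S j)) (x (S (S j))) (x (S (S (S j)))) (alpha (S j)) (alpha (S (S j)))
                  (gamma (S (S j))) Hl Ha (Hgam _) A1 A2 A3 A4
                  (Hrec (S j) ltac:(lia)) (Hrec (S (S j)) ltac:(lia))
                  (Halpha (S (S j)) ltac:(lia))) as [B1 [B2 [B3 B4]]].
      exact B4. }
  destruct (theta_comp theta Hth) as [T1 T2].
  destruct theta as [ta tb]. cbn [fst snd] in T1, T2.
  set (L := ln lam).
  change (ln lam) with L in Hxi2.
  assert (HL : 0 < L) by (unfold L; rewrite <- ln_1; apply ln_increasing; lra).
  assert (Hs2 : sqrt 2 * sqrt 2 = 2) by (apply sqrt_sqrt; lra).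
  assert (Hs0 : 0 <= sqrt 2) by apply sqrt_pos.
  assert (Hs1 : 7/5 < sqrt 2) by nra.
  assert (Rec : forall j, Cmod (xi (S (S (S j)))) >= sqrt 2 * Cmod (xi (S (S j))) - 2 * L).
  { intro j. unfold xi.
    replace (S (S (S j)) - 1)%nat with (S (S j)) by lia.
    replace (S (S j) - 1)%nat with (S j) by lia.
    rewrite (xi_rec ta tb (Mlog (Amul lam (x (S j)))) (Mlog (Amul lam (x (S (S j))))) (Mlog (Amul lam (x (S (S (S j)))))) T1 T2).
    apply cmod_step.
    - apply cmod_theta; auto.
    - specialize (Del j). unfold L. apply Rabs_le. lra. }
  clearbody xi.
  set (c := 2 * L / (sqrt 2 - 1)).
  assert (Hc : c * (sqrt 2 - 1) = 2 * L) by (unfold c; field; lra).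
  assert (Hc8 : c <= 8 * L).
  { unfold c. apply Rle_div_l; [lra | nra]. }
  clearbody c L.
  set (e := Cmod (xi 2%nat) - c).
  assert (He : 0 < e) by (unfold e; lra).
  assert (Bnd : forall m, Cmod (xi (S (S m))) >= c + Rpower 2 (INR (S (S m)) / 2) * e / 2).
  { induction m as [|m IH].
    - replace (INR 2 / 2) with 1 by (simpl; lra). rewrite Rpower_1 by lra. unfold e. lra.
    - specialize (Rec m).
      replace (INR (S (S (S m))) / 2) with (INR (S (S m)) / 2 + / 2) by (rewrite (S_INR (S (S m))); field).
      rewrite Rpower_plus, Rpower_sqrt by lra.
      assert (c + Rpower 2 (INR (S (S m)) / 2) * sqrt 2 * e / 2
              = sqrt 2 * (c + Rpower 2 (INR (S (S m)) / 2) * e / 2) - 2 * L) by nra.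
      nra. }
  exists (e / (2 * (sqrt 2 - 1))). split.
  - apply Rdiv_lt_0_compat; lra.
  - intros k Hk. destruct k as [|[|m]]; try lia.
    specialize (Bnd m).
    assert (0 < Rpower 2 (INR (S (S m)) / 2)) by (unfold Rpower; apply exp_pos).
    replace ((sqrt 2 - 1) * Rpower 2 (INR (S (S m)) / 2) * (e / (2 * (sqrt 2 - 1))))
      with (Rpower 2 (INR (S (S m)) / 2) * e / 2) by (field; lra).
    nra.
Qed.
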